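(* Let $(W,S)$ be a finitely generated Coxeter system, $u,v\in W$ with $u<v$, and $w,g\in[u,v]$. Then: (a) $v_{S(w)\cup S(g)}$ lies in $[u,v]$ and is the least upper bound $w\vee g$ of $w$ and $g$ in $[u,v]$; moreover $S(w\vee g)=S(w)\cup S(g)$. (b) $v_{S(w)\cap S(g)}$ lies in $[u,v]$ and is the greatest lower bound $w\wedge g$ of $w$ and $g$ in $[u,v]$; moreover $S(w\wedge g)\subseteq S(w)\cap S(g)$.
   Context: $(W,S)$ is a finitely generated Coxeter system with length function $\ell$. For $w\in W$, $S(w)\subseteq S$ is the set of simple reflections appearing in a (any) reduced expression of $w$. For $I\subseteq S$, $W_I$ is the parabolic subgroup generated by $I$, $X_I=\{u\in W:\ell(us)>\ell(u)\ \forall s\in I\}$, and every $w\in W$ factors uniquely as $w=w^Iw_I$ with $w^I\in X_I$, $w_I\in W_I$ (parabolic components along $I$). The partial order on $W$: $u\le v$ iff $v_{S(u)}=u$; $[u,v]=\{w:u\le w\le v\}$. *)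

(* Defs.v *)
From mathcomp Require Import all_boot.
From mathcomp Require Import boolp.
Set Implicit Arguments. Unset Strict Implicit. Unset Printing Implicit Defensive.

Definition is_group (H : Type) (mul : H -> H -> H) (one : H) (inv : H -> H) :=
  [/\ forall x y z, mul x (mul y z) = mul (mul x y) z,
      forall x, mul one x = x & forall x, mul (inv x) x = one].

Fixpoint gpow (H : Type) (mul : H -> H -> H) (one : H) (x : H) (k : nat) : H :=
  if k is k'.+1 then mul x (gpow mul one x k') else one.

(* A finitely generated Coxeter system (W,S): S = {gen i | i : 'I_rank} is a
   finite set of distinct non-trivial involutions generating W, and W has the
   presentation < S | s^2 = 1, (st)^(m(s,t)) = 1 > where m(s,t) is the order of
   st (no relation when infinite): stated via the universal property of the
   presentation, i.e. every map f of S into a group respecting all the relations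
   s^2 = 1 and (st)^k = 1 that hold in W extends to a group homomorphism. *)
Record coxsys := CoxSys {
  cW :> Type;
  cmul : cW -> cW -> cW;
  cone : cW;
  cinv : cW -> cW;
  cgroup : is_group cmul cone cinv;
  rank : nat;
  gen : 'I_rank -> cW;
  gen_inj : injective gen;
  gen_neq1 : forall i, gen i <> cone;
  gen_invol : forall i, cmul (gen i) (gen i) = cone;
  gen_generates : forall w : cW, exists s : seq 'I_rank,
      foldr (fun i acc => cmul (gen i) acc) cone s = w;
  presentation : forall (H : Type) (hmul : H -> H -> H) (hone : H) (hinv : H -> H),
      is_group hmul hone hinv ->
      forall f : 'I_rank -> H,
        (forall i, hmul (f i) (f i) = hone) ->
        (forall i j k, gpow cmul cone (cmul (gen i) (gen j)) k = cone ->
                       gpow hmul hone (hmul (f i) (f j)) k = hone) ->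
        exists phi : cW -> H,
          (forall x y, phi (cmul x y) = hmul (phi x) (phi y)) /\
          (forall i, phi (gen i) = f i)
}.

Section Coxeter.
Variable C : coxsys.
Local Notation W := (cW C).
Local Notation n := (rank C).
Local Notation "x * y" := (cmul x y).

Definition ev (s : seq 'I_n) : W := foldr (fun i acc => gen i * acc) (cone C) s.

Lemma ex_len_ex (w : W) : exists k, `[< exists s, size s = k /\ ev s = w >].
Proof.
have [s Hs] := gen_generates w.
by exists (size s); apply/asboolP; exists s.
Qed.

Definition clen (w : W) : nat := ex_minn (ex_len_ex w).

Definition reduced_expr (s : seq 'I_n) (w : W) := ev s = w /\ size s = clen w.

Definition supp (w : W) : {set 'I_n} :=
  [set i | `[< exists s, reduced_expr s w /\ i \in s >]].

Definition inWI (I : {set 'I_n}) (w : W) :=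
  exists s : seq 'I_n, all (fun i => i \in I) s /\ ev s = w.

Definition inXI (I : {set 'I_n}) (u : W) :=
  forall i, i \in I -> clen u < clen (u * gen i).

(* x is the parabolic component w_I : w = w^I w_I with w^I in X_I, w_I in W_I *)
Definition is_par_comp (I : {set 'I_n}) (w x : W) :=
  inWI I x /\ inXI I (w * cinv x).

(* w_I (the factorization exists and is unique; w itself if none, never used) *)
Definition par_comp (I : {set 'I_n}) (w : W) : W :=
  match pselect (exists x, is_par_comp I w x) with
  | left H => projT1 (cid H)
  | right _ => w
  end.

Definition cle (u v : W) := par_comp (supp u) v = u.
Definition clt (u v : W) := cle u v /\ u <> v.

Definition in_interval (u v w : W) := cle u w /\ cle w v.

Definition is_lub_in (u v w g x : W) :=
  [/\ in_interval u v x, cle w x, cle g x &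
      forall y, in_interval u v y -> cle w y -> cle g y -> cle x y].

Definition is_glb_in (u v w g x : W) :=
  [/\ in_interval u v x, cle x w, cle x g &
      forall y, in_interval u v y -> cle y w -> cle y g -> cle y x].

End Coxeter.

(* Main.v *)
Require Import Defs.
From mathcomp Require Import all_boot.
From mathcomp Require Import boolp.
From mathcomp Require Import zify.
Set Implicit Arguments. Unset Strict Implicit. Unset Printing Implicit Defensive.

Section Cox.
Variable C : coxsys.
Local Notation W := (cW C).
Local Notation n := (rank C).
Local Notation "x * y" := (cmul x y).
Local Notation "x ^-1" := (cinv x).
Local Notation one := (cone C).
Local Notation word := (seq 'I_n).
Local Notation gen := (@gen C).
Local Notation ev := (@ev C).
Local Notation clen := (@clen C).

Lemma mulA (x y z : W) : x * (y * z) = x * y * z.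
Proof. by case: (cgroup C). Qed.
Lemma mul1g (x : W) : one * x = x.
Proof. by case: (cgroup C). Qed.
Lemma mulVg (x : W) : x^-1 * x = one.
Proof. by case: (cgroup C). Qed.
Lemma mulgV (x : W) : x * x^-1 = one.
Proof.
rewrite -[x * _]mul1g -{1}(mulVg (x^-1)) -mulA [x^-1 * (x * _)]mulA mulVg.
by rewrite mul1g mulVg.
Qed.
Lemma mulg1 (x : W) : x * one = x.
Proof. by rewrite -(mulVg x) mulA mulgV mul1g. Qed.
Lemma mulKg (x y : W) : x^-1 * (x * y) = y.
Proof. by rewrite mulA mulVg mul1g. Qed.
Lemma mulKVg (x y : W) : x * (x^-1 * y) = y.
Proof. by rewrite mulA mulgV mul1g. Qed.
Lemma mulgK (x y : W) : y * x * x^-1 = y.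
Proof. by rewrite -mulA mulgV mulg1. Qed.
Lemma mulgKV (x y : W) : y * x^-1 * x = y.
Proof. by rewrite -mulA mulVg mulg1. Qed.
Lemma mulg_injl (x y z : W) : x * y = x * z -> y = z.
Proof. by move=> h; rewrite -(mulKg x y) h mulKg. Qed.
Lemma mulg_injr (x y z : W) : y * x = z * x -> y = z.
Proof. by move=> h; rewrite -(mulgK x y) h mulgK. Qed.
Lemma invK (x : W) : (x^-1)^-1 = x.
Proof. by apply: (@mulg_injl (x^-1)); rewrite mulgV mulVg. Qed.
Lemma invM (x y : W) : (x * y)^-1 = y^-1 * x^-1.
Proof.
apply: (@mulg_injl (x * y)); rewrite mulgV -mulA [y * (_ * _)]mulA mulgV mul1g.
by rewrite mulgV.
Qed.
Lemma inv1 : one^-1 = one :> W.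
Proof. by rewrite -[one^-1]mul1g mulgV. Qed.
Lemma inv_eq1 (x : W) : x^-1 = one -> x = one.
Proof. by move=> h; rewrite -(invK x) h inv1. Qed.
Lemma inv_gen i : (gen i)^-1 = gen i.
Proof. by apply: (@mulg_injl (gen i)); rewrite mulgV gen_invol. Qed.
Lemma genK i (x : W) : gen i * (gen i * x) = x.
Proof. by rewrite mulA gen_invol mul1g. Qed.
Lemma genKr i (x : W) : x * gen i * gen i = x.
Proof. by rewrite -mulA gen_invol mulg1. Qed.

Lemma ev_nil : ev [::] = one :> W. Proof. by []. Qed.
Lemma ev_cons i (s : word) : ev (i :: s) = gen i * ev s. Proof. by []. Qed.
Lemma ev_cat (s t : word) : ev (s ++ t) = ev s * ev t.
Proof. elim: s => [|i s IH] /=; first by rewrite mul1g. by rewrite IH mulA. Qed.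
Lemma ev_rcons (s : word) i : ev (rcons s i) = ev s * gen i.
Proof. by rewrite -cats1 ev_cat /= mulg1. Qed.
Lemma ev_rev (s : word) : ev (rev s) = (ev s)^-1.
Proof.
elim: s => [|i s IH]; first by rewrite /= inv1.
by rewrite rev_cons ev_rcons IH ev_cons invM inv_gen.
Qed.

Lemma clen_spec (w : W) : exists s : word, size s = clen w /\ ev s = w.
Proof.
rewrite /clen; case: ex_minnP => m /asboolP [s [h1 h2]] _; by exists s.
Qed.
Lemma clen_min (w : W) (s : word) : ev s = w -> clen w <= size s.
Proof.
move=> h; rewrite /clen; case: ex_minnP => m _; apply.
by apply/asboolP; exists s.
Qed.
Lemma clen1 : clen (one : W) = 0.
Proof. by apply/eqP; rewrite -leqn0 (clen_min (s := [::])). Qed.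
Lemma clen0 (w : W) : clen w = 0 -> w = one.
Proof. move=> H; case: (clen_spec w) => [[|i s] [h e]]; first by rewrite -e. by rewrite H in h. Qed.
Lemma clen_gen i : clen (gen i) = 1.
Proof.
apply/eqP; rewrite eqn_leq (clen_min (s := [:: i])) ?andbT /=; last by rewrite mulg1.
rewrite lt0n; apply/eqP => /clen0; apply: gen_neq1.
Qed.
Lemma clen_mul (x y : W) : clen (x * y) <= clen x + clen y.
Proof.
case: (clen_spec x) => s [<- <-]; case: (clen_spec y) => t [<- <-].
by rewrite -size_cat; apply: clen_min; rewrite ev_cat.
Qed.
Lemma clen_inv (w : W) : clen (w^-1) = clen w.
Proof.
apply/eqP; rewrite eqn_leq; case: (clen_spec w) => s [h1 h2].
rewrite -{1}h1 -size_rev (clen_min (s := rev s)) ?ev_rev ?h2 //=.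
case: (clen_spec (w^-1)) => t [<- h3].
by rewrite -size_rev; apply: clen_min; rewrite ev_rev h3 invK.
Qed.
Lemma clen_genl i (w : W) : clen (gen i * w) <= (clen w).+1.
Proof. by rewrite -add1n -(clen_gen i) clen_mul. Qed.
Lemma clen_genl' i (w : W) : clen w <= (clen (gen i * w)).+1.
Proof. by rewrite -{1}(genK i w) clen_genl. Qed.
Lemma clen_genr i (w : W) : clen (w * gen i) <= (clen w).+1.
Proof. by rewrite -addn1 -(clen_gen i) clen_mul. Qed.
Lemma clen_genr' i (w : W) : clen w <= (clen (w * gen i)).+1.
Proof. by rewrite -{1}(genKr i w) clen_genr. Qed.


Lemma idem_one (H : Type) (m : H -> H -> H) (e : H) (iv : H -> H) :
  is_group m e iv -> forall x, m x x = x -> x = e.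
Proof.
case=> hA h1 hV x hx.
by rewrite -(hV x) -{3}hx hA hV h1.
Qed.

Lemma gpowS (a : W) k : gpow (@cmul C) one a k.+1 = a * gpow (@cmul C) one a k.
Proof. by []. Qed.
Lemma gpowD (a : W) m k : gpow (@cmul C) one a (m + k) = gpow (@cmul C) one a m * gpow (@cmul C) one a k.
Proof. elim: m => [|m IH]; first by rewrite /= mul1g. by rewrite addSn !gpowS IH mulA. Qed.
Lemma gpowSr (a : W) k : gpow (@cmul C) one a k.+1 = gpow (@cmul C) one a k * a.
Proof. by rewrite -addn1 gpowD /= mulg1. Qed.

Lemma conj_eq (x y z : W) : (y^-1 * x * y = z) <-> (x = y * z * y^-1).
Proof.
split=> [<-|->]; first by rewrite !mulA mulgV mul1g mulgK.
by rewrite !mulA mulVg mul1g mulgKV.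
Qed.

(* the semidirect product W x| (W -> bool) *)
Definition Hty := (W * (W -> bool))%type.
Definition hmul (p q : Hty) : Hty :=
  (p.1 * q.1, fun x => p.2 x (+) q.2 (p.1^-1 * x * p.1)).
Definition hone : Hty := (one, fun _ => false).
Definition hinv (p : Hty) : Hty := (p.1^-1, fun x => p.2 (p.1 * x * p.1^-1)).

Lemma H_group : is_group hmul hone hinv.
Proof.
split.
- move=> [a p] [b q] [c r]; rewrite /hmul /=; congr pair; first exact: mulA.
  by apply: funext => x /=; rewrite addbA invM !mulA.
- move=> [a p]; rewrite /hmul /=; congr pair; first exact: mul1g.
  by apply: funext => x /=; rewrite inv1 mul1g mulg1.
- move=> [a p]; rewrite /hmul /hone /=; congr pair; first exact: mulVg.
  apply: funext => x /=; rewrite invK; exact: addbb.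
Qed.

Definition fH (i : 'I_n) : Hty := (gen i, fun x => `[< x = gen i >]).

Lemma fH_invol i : hmul (fH i) (fH i) = hone.
Proof.
rewrite /hmul /hone /=; congr pair; first exact: gen_invol.
apply: funext => x /=.
have -> : `[< (gen i)^-1 * x * gen i = gen i >] = `[< x = gen i >].
  apply: asbool_equiv_eq; rewrite conj_eq inv_gen gen_invol mul1g; done.
exact: addbb.
Qed.

Section Rel.
Variables (i j : 'I_n).
Let s := gen i.
Let t := gen j.
Let a := s * t.
Let G (x : W) (m : nat) : bool := `[< x = gpow (@cmul C) one a m * s >].

Lemma sainv : s * a^-1 = a * s.
Proof. by rewrite /a invM !inv_gen mulA. Qed.

Lemma gpow_comm m : gpow (@cmul C) one a m * a = a * gpow (@cmul C) one a m.
Proof. by rewrite -gpowSr. Qed.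

Lemma key y m : (a^-1 * y * a = gpow (@cmul C) one a m * s) <->
   (y = gpow (@cmul C) one a m.+2 * s).
Proof.
have E : a * (gpow (@cmul C) one a m * s) * a^-1 = gpow (@cmul C) one a m.+2 * s.
  rewrite -mulA -mulA sainv [gpow _ _ _ _ * (a * s)]mulA gpow_comm.
  by rewrite (gpowS a m.+1) (gpowS a m) !mulA.
by rewrite conj_eq E.
Qed.

Lemma gpow_rel k : gpow hmul hone (hmul (fH i) (fH j)) k =
  (gpow (@cmul C) one a k, fun x => \big[addb/false]_(0 <= m < k.*2) G x m).
Proof.
elim: k => [|k IH]; first by rewrite /= /hone; congr pair; apply: funext => x; rewrite big_geq.
rewrite /= IH /hmul /=; congr pair.
apply: funext => x /=.
rewrite doubleS big_nat_recl // big_nat_recl // addbA; congr (_ (+) _ (+) _).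
- by rewrite /G /= mul1g.
- rewrite /G /=; apply: asbool_equiv_eq; rewrite conj_eq inv_gen /a mulg1.
  by [].
- by apply: eq_bigr => m _; rewrite /G; apply: asbool_equiv_eq; apply: key.
Qed.

Lemma rel_ok k : gpow (@cmul C) one (gen i * gen j) k = one ->
  gpow hmul hone (hmul (fH i) (fH j)) k = hone.
Proof.
move=> hk; rewrite gpow_rel /hone -/s -/t -/a hk; congr pair.
apply: funext => x; rewrite -addnn (@big_cat_nat _ _ _ k) ?leq_addr //=.
rewrite -{2}(add0n k) big_addn addnK.
rewrite [X in _ (+) X](eq_bigr (G x)); first exact: addbb.
by move=> m _; rewrite /G gpowD -/a hk mulg1.
Qed.
End Rel.

Definition phi_ex := presentation H_group fH_invol (@rel_ok).
Definition phi : W -> Hty := projT1 (cid phi_ex).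
Lemma phiM x y : phi (x * y) = hmul (phi x) (phi y).
Proof. by case: (projT2 (cid phi_ex)). Qed.
Lemma phi_gen i : phi (gen i) = fH i.
Proof. by case: (projT2 (cid phi_ex)). Qed.
Lemma phi_one : phi one = hone.
Proof. by apply: (idem_one H_group); rewrite -phiM mulg1. Qed.

Definition etaW (w : W) : W -> bool := (phi w).2.

Fixpoint eta (s : word) : W -> bool :=
  if s is i :: s' then fun x => `[< x = gen i >] (+) eta s' ((gen i)^-1 * x * gen i)
  else fun _ => false.

Lemma phi_ev s : phi (ev s) = (ev s, eta s).
Proof.
elim: s => [|i s IH]; first by rewrite phi_one.
by rewrite ev_cons phiM IH phi_gen.
Qed.
Lemma etaW_ev s : etaW (ev s) = eta s.
Proof. by rewrite /etaW phi_ev. Qed.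

Lemma eta_exch (s : word) x : eta s x ->
  exists t, [/\ subseq t s, size t < size s & ev t = x * ev s].
Proof.
elim: s x => [|i s IH] x //=.
case: (asboolP (x = gen i)) => [-> _|_ /= /IH [t [h1 h2 h3]]].
  by exists s; split; [exact: subseq_cons | exact: ltnSn | rewrite /= genK].
exists (i :: t); split; first by rewrite /= eqxx.
  by rewrite /= ltnS.
by rewrite /= h3 inv_gen !mulA gen_invol mul1g.
Qed.

Lemma etaW_gen i w : etaW (gen i * w) (gen i) = ~~ etaW w (gen i).
Proof.
rewrite /etaW phiM phi_gen /hmul /=.
have -> : `[< gen i = gen i >] = true by apply/asboolP.
by rewrite inv_gen gen_invol mul1g.
Qed.

Lemma desc i w : etaW w (gen i) -> clen (gen i * w) < clen w.
Proof.
move=> h; case: (clen_spec w) => s [hs he]; subst w.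
move: h; rewrite etaW_ev => /eta_exch [t [_ h2 h3]].
by rewrite -hs; apply: leq_ltn_trans (clen_min h3) h2.
Qed.

Lemma asc i w : ~~ etaW w (gen i) -> clen w < clen (gen i * w).
Proof. by move=> h; have := @desc i (gen i * w); rewrite etaW_gen h genK; apply. Qed.

Lemma parity_l i w : clen (gen i * w) = (clen w).+1 \/ clen w = (clen (gen i * w)).+1.
Proof.
case: (boolP (etaW w (gen i))) => h.
  right; apply/eqP; rewrite eqn_leq clen_genl' /=; exact: desc.
left; apply/eqP; rewrite eqn_leq clen_genl /=; exact: asc.
Qed.

Lemma lexch i w (s : word) : clen (gen i * w) < clen w -> ev s = w ->
  exists t, [/\ subseq t s, size t < size s & ev t = gen i * w].
Proof.
move=> hl he; case: (boolP (etaW w (gen i))) => h.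
  by move: h; rewrite -he etaW_ev => /eta_exch.
by have := asc h; rewrite ltnNge ltnW.
Qed.

Lemma rexch i w (s : word) : clen (w * gen i) < clen w -> ev s = w ->
  exists t, [/\ subseq t s, size t < size s & ev t = w * gen i].
Proof.
move=> hl he.
have E : gen i * w^-1 = (w * gen i)^-1 by rewrite invM inv_gen.
have h' : clen (gen i * w^-1) < clen (w^-1) by rewrite E !clen_inv.
have [t [h1 h2 h3]] := lexch h' (etrans (ev_rev s) (congr1 _ he)).
exists (rev t); split.
- by rewrite -subseq_rev revK.
- by rewrite size_rev -(size_rev s).
- by rewrite ev_rev h3 E invK.
Qed.

Lemma parity_r i w : clen (w * gen i) = (clen w).+1 \/ clen w = (clen (w * gen i)).+1.
Proof.
have E : gen i * w^-1 = (w * gen i)^-1 by rewrite invM inv_gen.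
by have := parity_l i (w^-1); rewrite E !clen_inv.
Qed.

Lemma reduce (s : word) : exists t, [/\ subseq t s, ev t = ev s & size t = clen (ev s)].
Proof.
elim/last_ind: s => [|s i [t [h1 h2 h3]]]; first by exists [::]; rewrite clen1.
rewrite ev_rcons; case: (parity_r i (ev s)) => hp.
  exists (rcons t i); split.
  - by rewrite -!cats1 subseq_cat2r.
  - by rewrite ev_rcons h2.
  - by rewrite size_rcons hp h3.
have hlt : clen (ev s * gen i) < clen (ev s) by rewrite hp.
have [t' [h1' h2' h3']] := rexch hlt h2.
exists t'; split.
- apply: subseq_trans h1' _; apply: subseq_trans h1 _; exact: subseq_rcons.
- exact: h3'.
- apply/eqP; rewrite eqn_leq clen_min //= -ltnS -hp -h3 h2'. done.
Qed.

Lemma all_subseq (P : pred 'I_n) (t s : word) : subseq t s -> all P s -> all P t.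
Proof. by move=> h /allP H; apply/allP => x /(mem_subseq h); apply: H. Qed.

Lemma split_subseq (t a b : word) : subseq t (a ++ b) ->
  exists a' b', [/\ t = a' ++ b', subseq a' a & subseq b' b].
Proof.
case/subseqP => m hm ->.
have hs : size (take (size a) m) = size a by rewrite size_takel // hm size_cat leq_addr.
exists (mask (take (size a) m) a), (mask (drop (size a) m) b); split.
- by rewrite -mask_cat // cat_take_drop.
- exact: mask_subseq.
- exact: mask_subseq.
Qed.

Local Notation inWI := (@inWI C).
Local Notation inXI := (@inXI C).

Lemma inWI1 (I : {set 'I_n}) : inWI I one.
Proof. by exists [::]. Qed.
Lemma inWI_gen (I : {set 'I_n}) i : i \in I -> inWI I (gen i).
Proof. by move=> h; exists [:: i]; rewrite /= h /= mulg1. Qed.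
Lemma inWI_mul (I : {set 'I_n}) x y : inWI I x -> inWI I y -> inWI I (x * y).
Proof.
by move=> [s [hs <-]] [t [ht <-]]; exists (s ++ t); rewrite all_cat hs ht ev_cat.
Qed.
Lemma inWI_inv (I : {set 'I_n}) x : inWI I x -> inWI I (x^-1).
Proof. by move=> [s [hs <-]]; exists (rev s); rewrite all_rev hs ev_rev. Qed.
Lemma inWI_sub (I J : {set 'I_n}) x : I \subset J -> inWI I x -> inWI J x.
Proof.
move=> /subsetP hIJ [s [hs <-]]; exists s; split => //.
by apply/allP => i /(allP hs) /hIJ.
Qed.
Lemma inWI_red (I : {set 'I_n}) x : inWI I x -> exists s, [/\ all (fun i => i \in I) s, ev s = x & size s = clen x].
Proof.
move=> [s [hs <-]]; have [t [h1 h2 h3]] := reduce s.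
by exists t; rewrite h2 h3; split => //; apply: all_subseq h1 hs.
Qed.

Section Par.
Variable I : {set 'I_n}.

Lemma reduced_rcons (s : word) i : size (rcons s i) = clen (ev (rcons s i)) ->
  size s = clen (ev s).
Proof.
rewrite size_rcons ev_rcons => h; apply/eqP; rewrite eqn_leq clen_min //=.
by rewrite -ltnS h clen_genr.
Qed.

Lemma minL x0 : (forall z, inWI I z -> clen x0 <= clen (x0 * z)) ->
  forall y, inWI I y -> clen (x0 * y) = clen x0 + clen y.
Proof.
move=> hmin y /inWI_red [b [hb <- hs]]; rewrite -hs.
elim/last_ind: b hb hs => [|b i IH]; first by rewrite /= mulg1 addn0.
rewrite all_rcons => /andP [hi hb] hs.
have hs' := reduced_rcons hs.
have {}IH := IH hb hs'.
rewrite ev_rcons mulA size_rcons addnS.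
case: (parity_r i (x0 * ev b)) => hp; first by rewrite hp IH.
exfalso.
have [a [ha1 ha2]] := clen_spec x0.
have hlt : clen (x0 * ev b * gen i) < clen (x0 * ev b) by rewrite hp.
have [t [ht1 ht2 ht3]] := rexch hlt (etrans (ev_cat a b) (congr1 (fun z => z * ev b) ha2)).
have [a' [b' [et ha' hb']]] := split_subseq ht1.
subst t; rewrite ev_cat in ht3; rewrite !size_cat in ht2.
have [eqa|nea] := eqVneq a' a.
- subst a'; rewrite ha2 -mulA in ht3; have e := mulg_injl ht3.
  have := clen_min e; rewrite -ev_rcons -hs size_rcons.
  by rewrite ltnNge ltnW // -(ltn_add2l (size a)).
- have lta : size a' < size a.
    by rewrite ltn_neqAle (size_subseq_leqif ha').2 nea (size_subseq_leqif ha').1.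
  set z := ev b * gen i * (ev b')^-1.
  have hz : inWI I z.
    apply: inWI_mul; first apply: inWI_mul; first by exists b.
    - exact: inWI_gen.
    - apply: inWI_inv; exists b'; split => //; exact: all_subseq hb' hb.
  have := hmin z hz.
  have -> : x0 * z = ev a' by rewrite /z !mulA -ht3 mulgK.
  rewrite leqNgt; move/negP; apply.
  by apply: leq_ltn_trans (clen_min (erefl _)) _; rewrite -ha1.
Qed.

Lemma exists_min x : exists z, inWI I z /\
  forall z', inWI I z' -> clen (x * z) <= clen (x * z * z').
Proof.
have ex : exists k, `[< exists z, inWI I z /\ clen (x * z) = k >].
  by exists (clen (x * one)); apply/asboolP; exists one; split => //; exact: inWI1.
case: (ex_minnP ex) => k /asboolP [z [hz hk]] hmin.
exists z; split => // z' hz'; rewrite hk -mulA; apply: hmin; apply/asboolP.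
by exists (z * z'); split => //; apply: inWI_mul.
Qed.

Lemma XI_len x y : inXI I x -> inWI I y -> clen (x * y) = clen x + clen y.
Proof.
move=> hx hy; have [z [hz hmin]] := exists_min x.
have hL := minL hmin.
suff ex : x = x * z by rewrite ex; apply: hL.
have hx0 : x = (x * z) * z^-1 by rewrite mulgK.
have hzi : inWI I (z^-1) by apply: inWI_inv.
have [b [hb eb hsb]] := inWI_red hzi.
case/lastP: b hb eb hsb => [|b' i] hb eb hsb.
  by rewrite {1}hx0 -eb /= mulg1.
exfalso; move: hb; rewrite all_rcons => /andP [hi hb'].
have := hx i hi.
have -> : x * gen i = x * z * ev b'.
  by rewrite {1}hx0 -eb ev_rcons !mulA genKr.
rewrite ltnNge; move/negP; apply.
rewrite {2}hx0 (hL _ hzi) -hsb size_rcons.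
apply: leq_trans (clen_mul _ _) _; rewrite addnS ltnW // ltnS leq_add2l.
exact: clen_min.
Qed.

Lemma exists_pc w : exists x, is_par_comp I w x.
Proof.
have [z [hz hmin]] := exists_min w.
exists (z^-1); split; first exact: inWI_inv.
move=> i hi; rewrite invK.
have := hmin _ (inWI_gen hi).
by case: (parity_r i (w * z)) => ->; rewrite ?ltnSn // ltnn.
Qed.

Lemma pc_uniq w a b : is_par_comp I w a -> is_par_comp I w b -> a = b.
Proof.
move=> [ha hxa] [hb hxb].
set z := a * b^-1.
have hz : inWI I z by apply: inWI_mul => //; apply: inWI_inv.
have e1 : w * b^-1 = (w * a^-1) * z by rewrite /z !mulA mulgKV.
have e2 : w * a^-1 = (w * b^-1) * z^-1 by rewrite e1 mulgK.
have l1 := XI_len hxa hz; rewrite -e1 in l1.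
have l2 := XI_len hxb (inWI_inv hz); rewrite -e2 clen_inv in l2.
have z1 : clen z = 0.
  by move: l1; rewrite l2; lia.
by apply: (@mulg_injr (b^-1)); rewrite mulgV -/z (clen0 z1).
Qed.

Lemma pc_spec w : is_par_comp I w (par_comp I w).
Proof.
rewrite /par_comp; case: pselect => [H|H]; first exact: (projT2 (cid H)).
by exfalso; apply: H; apply: exists_pc.
Qed.

Lemma pc_eq w x : is_par_comp I w x -> par_comp I w = x.
Proof. by move=> h; apply: pc_uniq h; apply: pc_spec. Qed.

Lemma pc_WI x : inWI I x -> par_comp I x = x.
Proof.
move=> hx; apply: pc_eq; split => // i _.
by rewrite mulgV mul1g clen1 clen_gen.
Qed.

End Par.

Lemma in_supp i w : i \in supp w <-> exists s, [/\ ev s = w, size s = clen w & i \in s].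
Proof.
rewrite /supp inE; split => [/asboolP [s [[h1 h2] h3]]|[s [h1 h2 h3]]].
  by exists s.
by apply/asboolP; exists s.
Qed.

Lemma inWI_supp w : inWI (supp w) w.
Proof.
have [s [h1 h2]] := clen_spec w; exists s; split => //.
by apply/allP => i hi; apply/in_supp; exists s.
Qed.

Lemma WI_all (I : {set 'I_n}) (s : word) : size s = clen (ev s) -> inWI I (ev s) ->
  all (fun i => i \in I) s.
Proof.
elim/last_ind: s => [|s i IH] // hred hw.
have hs := reduced_rcons hred.
move: hred hw; rewrite size_rcons ev_rcons => hred hw.
have hlt : clen (ev s * gen i * gen i) < clen (ev s * gen i) by rewrite genKr -hred -hs.
have [t [ht et _]] := inWI_red hw.
have [t' [ht' _ et']] := rexch hlt et.
have hsw : inWI I (ev s).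
  by exists t'; rewrite et' genKr; split => //; apply: all_subseq ht' ht.
rewrite all_rcons (IH hs hsw) andbT.
have hg : inWI I (gen i).
  by have := inWI_mul (inWI_inv hsw) hw; rewrite mulKg.
have [b [hb eb sb]] := inWI_red hg.
move: hb eb sb; rewrite clen_gen; case: b => [|j [|]] //= /andP [hj _].
by rewrite mulg1 => /gen_inj <-.
Qed.

Lemma supp_WI (I : {set 'I_n}) x : inWI I x -> supp x \subset I.
Proof.
move=> hx; apply/subsetP => i /in_supp [s [h1 h2 h3]].
subst x; by have /allP := WI_all h2 hx; apply.
Qed.

Lemma supp_pc (I : {set 'I_n}) v : supp (par_comp I v) \subset supp v.
Proof.
have [ha hxa] := pc_spec I v; set a := par_comp I v in ha hxa *.
have hl := XI_len hxa ha; rewrite mulgKV in hl.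
apply/subsetP => i /in_supp [b [eb sb ib]].
have [s [h1 h2]] := clen_spec (v * a^-1).
apply/in_supp; exists (s ++ b); split.
- by rewrite ev_cat h2 eb mulgKV.
- by rewrite size_cat h1 sb hl.
- by rewrite mem_cat ib orbT.
Qed.

Lemma pc_pc (I J : {set 'I_n}) v : I \subset J ->
  par_comp I (par_comp J v) = par_comp I v.
Proof.
move=> hIJ.
have [hb hxb] := pc_spec J v; set b := par_comp J v in hb hxb *.
have [hd hxd] := pc_spec I b; set d := par_comp I b in hd hxd *.
symmetry; apply: pc_eq; split => // i hi.
have e : v * d^-1 = (v * b^-1) * (b * d^-1) by rewrite !mulA mulgKV.
have hc : inWI J (b * d^-1) by apply: inWI_mul => //; apply/inWI_inv/(inWI_sub hIJ).
have hci : inWI J (b * d^-1 * gen i).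
  by apply: inWI_mul => //; apply: inWI_gen; apply: (subsetP hIJ).
rewrite e (XI_len hxb hc) -mulA (XI_len hxb hci) ltn_add2l.
exact: hxd.
Qed.

Local Notation cle := (@cle C).

Lemma cle_supp x y : cle x y -> supp x \subset supp y.
Proof. by rewrite /cle => <-; apply: supp_pc. Qed.

Lemma cle_K y v (I : {set 'I_n}) : cle y v -> supp y \subset I -> cle y (par_comp I v).
Proof. by rewrite /cle => hy hI; rewrite pc_pc. Qed.

Lemma cle_sub x y v : cle x v -> cle y v -> supp x \subset supp y -> cle x y.
Proof. by rewrite /cle => hx hy hs; rewrite -{1}hy pc_pc. Qed.

Lemma cle_trans x y v : cle x y -> cle y v -> cle x v.
Proof.
rewrite /cle => hxy hyv.
by rewrite -(pc_pc v (cle_supp hxy)) hyv hxy.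
Qed.

End Cox.

Theorem mainTheorem8 (C : coxsys) (u v w g : cW C) :
  clt u v -> in_interval u v w -> in_interval u v g ->
  (let j := par_comp (supp w :|: supp g) v in
     [/\ in_interval u v j, is_lub_in u v w g j & supp j = supp w :|: supp g]) /\
  (let m := par_comp (supp w :&: supp g) v in
     [/\ in_interval u v m, is_glb_in u v w g m & supp m \subset supp w :&: supp g]).
Proof.
move=> _ [huw hwv] [hug hgv]; split.
- move=> j.
  have hwj : cle w j := cle_K hwv (subsetUl _ _).
  have hgj : cle g j := cle_K hgv (subsetUr _ _).
  have hSj : supp j = supp w :|: supp g.
    apply/eqP; rewrite eqEsubset; apply/andP; split.
      by apply: supp_WI; exact: (pc_spec (supp w :|: supp g) v).1.
    by rewrite subUset (cle_supp hwj) (cle_supp hgj).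
  have hjv : cle j v by rewrite /cle hSj.
  have huj : cle u j.
    apply: cle_K (cle_trans huw hwv) _.
    exact: subset_trans (cle_supp huw) (subsetUl _ _).
  split => //; split => // y [_ hyv] hwy hgy.
  by apply: cle_sub hjv hyv _; rewrite hSj subUset (cle_supp hwy) (cle_supp hgy).
- move=> m.
  have hmK : supp m \subset supp w :&: supp g.
    by apply: supp_WI; exact: (pc_spec (supp w :&: supp g) v).1.
  have hmv : cle m v.
    rewrite /cle -(pc_pc v hmK) pc_WI //; exact: inWI_supp.
  have hum : cle u m.
    apply: cle_K (cle_trans huw hwv) _.
    by rewrite subsetI (cle_supp huw) (cle_supp hug).
  split => //; split => //.
  + by apply: cle_sub hmv hwv (subset_trans hmK (subsetIl _ _)).
  + by apply: cle_sub hmv hgv (subset_trans hmK (subsetIr _ _)).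
  + move=> y [_ hyv] hyw hyg; apply: cle_K hyv _.
    by rewrite subsetI (cle_supp hyw) (cle_supp hyg).
Qed.
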